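(* Let $a\in\mathbb{R}$ and $\gamma>0$, and assume \[ P=\tfrac12(1-\gamma^2a^2)+\sqrt{\gamma^2(-1+\gamma^2)+(\gamma^2a^2-1)^2/4}>1. \] Assume further the curvature condition $P>2\gamma-1$ and the strong negativity condition \[ (P+2\gamma^2-1)\left(P-1-2\sqrt{\gamma^2-P}\right)^2\ge (P-1)\left((P+1)^2-4\gamma^2\right). \] Then the closed-loop system of $x(t+1)=ax(t)+bu(t)+w(t)$, $x(0)=x_0$, $y(t)=x(t)+v(t)$ with unknown $b\in\{-1,1\}$, controlled by the certainty-equivalence dead-beat controller (defined in the context), has gain from $(w,v)$ to $x$ bounded above by $\gamma$; that is, for both $b\in\{-1,1\}$, all $T\ge 0$, all real sequences $w,v$ and all $x_0\in\mathbb{R}$, \[ \sum_{\tau=0}^{T+1}x(\tau)^2-\gamma^2\sum_{\tau=0}^{T}w(\tau)^2-\gamma^2\sum_{\tau=0}^{T+1}v(\tau)^2-Px(0)^2\le 0. \]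
   Context: Set $\hat a=\frac{aP}{P+\gamma^2-1}$ and $\hat g=\frac{\gamma^2a}{P+\gamma^2-1}$. For $i\in\{-1,1\}$ the controller runs observers $\hat x_i(t+1)=\hat a\hat x_i(t)+iu(t)+\hat gy(t)$, $\hat x_i(0)=0$, and cumulative costs $l_i(t+1)=l_i(t)-P\hat x_i(t)^2-\gamma^2y(t)^2+\frac{(P\hat x_i(t)+\gamma^2y(t))^2}{P+\gamma^2-1}$, $l_i(0)=0$ (note $l_i(t+1)$ depends only on $\hat x_i(t)$ and $y(t)$). The certainty-equivalence dead-beat controller is \[ u(t)=\begin{cases}-(\hat a\hat x_1(t)+\hat gy(t)) & \text{if } l_1(t+1)\ge l_{-1}(t+1),\\ \hat a\hat x_{-1}(t)+\hat gy(t) & \text{if } l_1(t+1)<l_{-1}(t+1).\end{cases} \] *)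

(* Defs.v *)
From Stdlib Require Import Reals.
Open Scope R_scope.

(* P as defined in the paper (Riccati solution). *)
Definition Pval (a gamma : R) : R :=
  /2 * (1 - gamma^2 * a^2)
  + sqrt (gamma^2 * (-1 + gamma^2) + (gamma^2 * a^2 - 1)^2 / 4).

Definition ahat (a gamma P : R) : R := a * P / (P + gamma^2 - 1).
Definition ghat (a gamma P : R) : R := gamma^2 * a / (P + gamma^2 - 1).

Definition lincr (gamma P xh y : R) : R :=
  - P * xh^2 - gamma^2 * y^2 + (P * xh + gamma^2 * y)^2 / (P + gamma^2 - 1).

(* Closed-loop state at time t:
   (x(t), xhat_1(t), xhat_{-1}(t), l_1(t), l_{-1}(t)). *)
Record cl_state := mkCL {
  cl_x : R; cl_xh1 : R; cl_xhm1 : R; cl_l1 : R; cl_lm1 : R }.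

Definition control (a gamma P : R) (s : cl_state) (y : R) : R :=
  let l1' := cl_l1 s + lincr gamma P (cl_xh1 s) y in
  let lm1' := cl_lm1 s + lincr gamma P (cl_xhm1 s) y in
  if Rle_dec lm1' l1'
  then - (ahat a gamma P * cl_xh1 s + ghat a gamma P * y)
  else ahat a gamma P * cl_xhm1 s + ghat a gamma P * y.

Definition cl_step (a b gamma P : R) (wt vt : R) (s : cl_state) : cl_state :=
  let y := cl_x s + vt in
  let u := control a gamma P s y in
  mkCL (a * cl_x s + b * u + wt)
       (ahat a gamma P * cl_xh1 s + 1 * u + ghat a gamma P * y)
       (ahat a gamma P * cl_xhm1 s + (-1) * u + ghat a gamma P * y)
       (cl_l1 s + lincr gamma P (cl_xh1 s) y)
       (cl_lm1 s + lincr gamma P (cl_xhm1 s) y).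

Fixpoint cl_traj (a b gamma P : R) (w v : nat -> R) (x0 : R) (t : nat)
  : cl_state :=
  match t with
  | O => mkCL x0 0 0 0 0
  | S n => cl_step a b gamma P (w n) (v n) (cl_traj a b gamma P w v x0 n)
  end.

Definition cl_x_traj (a b gamma : R) (w v : nat -> R) (x0 : R) (t : nat) : R :=
  cl_x (cl_traj a b gamma (Pval a gamma) w v x0 t).

(* Main.v *)
Require Import Defs.
From Stdlib Require Import Reals Lra Psatz.
Open Scope R_scope.


Lemma riccati a g : Pval a g > 1 ->
  (Pval a g)^2 - Pval a g + g^2*a^2*Pval a g - g^4 + g^2 = 0.
Proof.
  unfold Pval. set (S := g ^ 2 * (-1 + g ^ 2) + (g ^ 2 * a ^ 2 - 1) ^ 2 / 4).
  intros H.
  destruct (Rle_lt_dec 0 S) as [HS|HS].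
  - pose proof (sqrt_sqrt S HS) as E. set (q := sqrt S) in *.
    unfold S in E. nra.
  - rewrite (sqrt_neg_0 S (Rlt_le _ _ HS)) in H. nra.
Qed.

Lemma core (G u r w y : R) : G > 0 -> u > 0 -> r >= 0 -> u > 2*r ->
  G*(u-2*r) >= 2*r*u ->
  let th := (G*(u^2-4*r^2) - 4*r^2*u)/(2*u^2*G) in
  0 <= th <= 1 /\
  r^2*(w+2*G*y)^2 <= th*G^2*(w-u*y)^2 + (1-th)*G^2*u^2*y^2.
Proof.
  intros HG Hu Hr Hur H th.
  set (N := G*(u^2-4*r^2) - 4*r^2*u).
  assert (HN1 : N - 2*r*u^2 = (u+2*r)*(G*(u-2*r)-2*r*u)) by (unfold N; ring).
  assert (HN2 : N + 2*r*u^2 = (u-2*r)*(G*(u+2*r)+2*r*u)) by (unfold N; ring).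
  assert (N1 : N - 2*r*u^2 >= 0) by (rewrite HN1; apply Rle_ge, Rmult_le_pos; nra).
  assert (N2 : N + 2*r*u^2 >= 0) by (rewrite HN2; apply Rle_ge, Rmult_le_pos; nra).
  assert (Hth : th * (2*u^2*G) = N) by (unfold th; fold N; field; nra).
  assert (Hu2 : 2*u^2*G > 0) by (apply Rmult_gt_0_compat; nra).
  split.
  - split; nra.
  - set (X := th*G^2).
    set (Y := th*G).
    assert (fY : G*Y*(u^2-4*r^2) - r^2*(u^2-4*r^2) - (2*r^2+Y*u)^2 >= 0).
    { assert (E: (G*Y*(u^2-4*r^2) - r^2*(u^2-4*r^2) - (2*r^2+Y*u)^2)*(4*u^2)
               = (N - 2*r*u^2)*(N+2*r*u^2)).
      { assert (HY : Y * (2*u^2) = N) by (unfold Y; rewrite <- Hth; ring).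
        assert (F : G*Y*(u^2-4*r^2) - r^2*(u^2-4*r^2) - (2*r^2+Y*u)^2
                   = Y*N - Y^2*u^2 - r^2*u^2) by (unfold N; ring).
        rewrite F, <- HY. ring. }
      assert (0 <= (N - 2*r*u^2)*(N+2*r*u^2)) by (apply Rmult_le_pos; lra).
      nra. }
    set (C := G^2*(u^2-4*r^2)).
    assert (HC : C > 0).
    { unfold C. apply Rmult_gt_0_compat. nra.
      replace (u^2-4*r^2) with ((u-2*r)*(u+2*r)) by ring.
      apply Rmult_gt_0_compat; lra. }
    assert (Hbr : C*(X-r^2) - (2*G*r^2+X*u)^2 >= 0).
    { replace (C*(X-r^2) - (2*G*r^2+X*u)^2) with
        (G^2 * (G*Y*(u^2-4*r^2) - r^2*(u^2-4*r^2) - (2*r^2+Y*u)^2))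
        by (unfold C, X, Y; ring).
      nra. }
    assert (CM : C*((X - r^2)*w^2 - (4*G*r^2 + 2*X*u)*w*y + G^2*(u^2-4*r^2)*y^2)
       = (C*y - (2*G*r^2+X*u)*w)^2 + (C*(X-r^2) - (2*G*r^2+X*u)^2)*w^2)
      by (unfold C; ring).
    assert (M0 : (X - r^2)*w^2 - (4*G*r^2 + 2*X*u)*w*y + G^2*(u^2-4*r^2)*y^2 >= 0).
    { assert (0 <= (C*y - (2*G*r^2+X*u)*w)^2 + (C*(X-r^2) - (2*G*r^2+X*u)^2)*w^2).
      { apply Rplus_le_le_0_compat. apply pow2_ge_0. apply Rmult_le_pos. lra. apply pow2_ge_0. }
      rewrite <- CM in H0.
      destruct (Rle_lt_dec 0 ((X - r^2)*w^2 - (4*G*r^2 + 2*X*u)*w*y + G^2*(u^2-4*r^2)*y^2)); [lra|].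
      exfalso. assert (C * ((X - r^2)*w^2 - (4*G*r^2 + 2*X*u)*w*y + G^2*(u^2-4*r^2)*y^2) < 0).
      { nra. } lra. }
    assert (th*G^2*(w-u*y)^2 + (1-th)*G^2*u^2*y^2 - r^2*(w+2*G*y)^2 =
      (X - r^2)*w^2 - (4*G*r^2 + 2*X*u)*w*y + G^2*(u^2-4*r^2)*y^2) by (unfold X; ring).
    unfold X in *; lra.
Qed.

Lemma keyK a g P r z y m : g > 0 -> P > 1 ->
  P^2 - P + g^2*a^2*P - g^4 + g^2 = 0 ->
  r >= 0 -> r^2 = g^2 - P -> P - 1 > 2*r -> g^2*(P-1-2*r) >= 2*r*(P-1) ->
  m <= -(P/(P-1))*z^2 + lincr g P z y -> m <= lincr g P 0 y ->
  m + P/(P-1) * (ahat a g P * z + 2*ghat a g P*y)^2 <= 0.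
Proof.
  intros Hg HP Hric Hr Hr2 Hur H m1 m2.
  set (G := g^2) in *. set (u := P-1) in *. set (D := P + G - 1).
  assert (HG : G > 0) by (unfold G; nra).
  assert (HD : D > 0) by (unfold D; lra).
  assert (Hu : u > 0) by (unfold u; lra).
  assert (E1 : -(P/u)*z^2 + lincr g P z y = -(G*(P*z-u*y)^2/(u*D))).
  { unfold lincr, u, D. fold G. field. split; lra. }
  assert (E2 : lincr g P 0 y = -(G*u*y^2/D)).
  { unfold lincr, u, D. fold G. field. lra. }
  assert (Pa : P*a^2 = r^2*D/G).
  { unfold D. rewrite Hr2. field_simplify_eq. 2: lra.
    replace (g^4) with (G^2) in Hric by (unfold G; ring). fold G in Hric. nra. }
  assert (E3 : P/u * (ahat a g P * z + 2*ghat a g P*y)^2 = r^2*(P*z+2*G*y)^2/(u*G*D)).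
  { transitivity ((P*a^2)*(P*z+2*G*y)^2/(u*D^2)).
    { unfold ahat, ghat. fold G. fold D. field. split; lra. }
    rewrite Pa. field. repeat split; lra. }
  rewrite E1 in m1. rewrite E2 in m2. rewrite E3.
  destruct (core G u r (P*z) y HG Hu Hr Hur H) as [[t0 t1] C].
  set (th := (G*(u^2-4*r^2) - 4*r^2*u)/(2*u^2*G)) in *.
  set (K := /(u*G*D)).
  assert (HK : K > 0) by (unfold K; apply Rinv_0_lt_compat; repeat apply Rmult_gt_0_compat; lra).
  assert (F1 : G*(P*z-u*y)^2/(u*D) = K * (G^2*(P*z-u*y)^2)) by (unfold K; field; repeat split; lra).
  assert (F2 : G*u*y^2/D = K * (G^2*u^2*y^2)) by (unfold K; field; repeat split; lra).
  assert (F3 : r^2*(P*z+2*G*y)^2/(u*G*D) = K*(r^2*(P*z+2*G*y)^2)) by (unfold K; field; repeat split; lra).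
  rewrite F1 in m1. rewrite F2 in m2. rewrite F3.
  assert (Hm : m <= th * (-(K*(G^2*(P*z-u*y)^2))) + (1-th)*(-(K*(G^2*u^2*y^2)))) by nra.
  nra.
Qed.

Lemma lincr_le g P z y : g > 0 -> P > 1 -> lincr g P z y <= P/(P-1)*z^2.
Proof.
  intros Hg HP.
  assert (HD : P + g^2 - 1 > 0) by nra.
  assert (E : P/(P-1)*z^2 - lincr g P z y = g^2*(P*z-(P-1)*y)^2/((P-1)*(P+g^2-1))).
  { unfold lincr. field. split; lra. }
  assert (0 <= g^2*(P*z-(P-1)*y)^2/((P-1)*(P+g^2-1))).
  { apply Rmult_le_pos. apply Rmult_le_pos. nra. apply pow2_ge_0.
    apply Rlt_le, Rinv_0_lt_compat. apply Rmult_gt_0_compat; lra. }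
  lra.
Qed.

Lemma lincr0_le g P y : g > 0 -> P > 1 -> lincr g P 0 y <= 0.
Proof.
  intros Hg HP.
  assert (HD : P + g^2 - 1 > 0) by nra.
  assert (E : lincr g P 0 y = -(g^2*(P-1)*y^2/(P+g^2-1))).
  { unfold lincr. field. lra. }
  assert (0 <= g^2*(P-1)*y^2/(P+g^2-1)).
  { apply Rmult_le_pos. apply Rmult_le_pos. apply Rmult_le_pos. nra. lra. apply pow2_ge_0.
    apply Rlt_le, Rinv_0_lt_compat. lra. }
  lra.
Qed.

Lemma filt a g P b l x xh u w v : g > 0 -> P > 1 ->
  P^2 - P + g^2*a^2*P - g^4 + g^2 = 0 -> g^2 - P >= 0 ->
  l - P*(x-xh)^2 + x^2 - g^2*v^2 - g^2*w^2 <=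
  (l + lincr g P xh (x+v)) - P*((a*x + b*u + w) - (ahat a g P*xh + b*u + ghat a g P*(x+v)))^2.
Proof.
  intros Hg HP Hric HGP.
  set (G := g^2) in *. set (D := P + G - 1).
  assert (HD : D > 0) by (unfold D, G in *; nra).
  set (m := (P*xh + G*(x+v))/D). set (e := x - m).
  assert (E : (l + lincr g P xh (x+v)) - P*((a*x + b*u + w) - (ahat a g P*xh + b*u + ghat a g P*(x+v)))^2
     - (l - P*(x-xh)^2 + x^2 - G*v^2 - G*w^2)
     = D*e^2 + G*w^2 - P*(a*e+w)^2).
  { unfold e, m, lincr, ahat, ghat, D. fold G. field. unfold D in HD. lra. }
  assert (Q : D*e^2 + G*w^2 - P*(a*e+w)^2 >= 0).
  { destruct (Rle_lt_dec (G-P) 0) as [H0|H0].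
    - assert (GP : G = P) by lra.
      replace (g^4) with (G^2) in Hric by (unfold G; ring). fold G in Hric.
      rewrite GP in Hric. assert (P^2*a^2 = 0) by nra.
      assert (a = 0) by (destruct (Req_dec a 0); auto; exfalso; assert (P^2*a^2>0); [apply Rmult_lt_0_compat; nra|lra]).
      subst a. rewrite GP. nra.
    - replace (g^4) with (G^2) in Hric by (unfold G; ring). fold G in Hric.
      assert (Br : (D - P*a^2)*(G-P) - P^2*a^2 = 0).
      { unfold D. nra. }
      assert (Id : (G-P)*(D*e^2 + G*w^2 - P*(a*e+w)^2) = ((G-P)*w - P*a*e)^2 + e^2*((D - P*a^2)*(G-P) - P^2*a^2)) by ring.
      rewrite Br in Id.
      assert (0 <= (G-P)*(D*e^2 + G*w^2 - P*(a*e+w)^2)) by (rewrite Id, Rmult_0_r, Rplus_0_r; apply pow2_ge_0).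
      destruct (Rle_lt_dec 0 (D*e^2 + G*w^2 - P*(a*e+w)^2)); [lra|].
      exfalso. nra. }
  lra.
Qed.

Definition Inv (c : R) (s : cl_state) : Prop :=
  (cl_xh1 s = 0 \/ cl_xhm1 s = 0) /\ cl_l1 s + c*(cl_xh1 s)^2 <= 0 /\ cl_lm1 s + c*(cl_xhm1 s)^2 <= 0.

Lemma helper a g P r z y p q : g > 0 -> P > 1 ->
  P^2 - P + g^2*a^2*P - g^4 + g^2 = 0 ->
  r >= 0 -> r^2 = g^2 - P -> P - 1 > 2*r -> g^2*(P-1-2*r) >= 2*r*(P-1) ->
  p <= 0 -> q + P/(P-1)*z^2 <= 0 ->
  p + lincr g P 0 y <= 0 /\ q + lincr g P z y <= 0 /\
  (forall m, m <= p + lincr g P 0 y -> m <= q + lincr g P z y ->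
     m + P/(P-1) * (ahat a g P * z + 2*ghat a g P*y)^2 <= 0).
Proof.
  intros Hg HP Hric Hr Hr2 Hur H Hp Hq.
  pose proof (lincr0_le g P y Hg HP). pose proof (lincr_le g P z y Hg HP).
  split; [lra|split; [lra|]].
  intros m m1 m2. apply (keyK a g P r z y m); auto; lra.
Qed.

Lemma inv_step a b g P r wt vt s : g > 0 -> P > 1 ->
  P^2 - P + g^2*a^2*P - g^4 + g^2 = 0 ->
  r >= 0 -> r^2 = g^2 - P -> P - 1 > 2*r -> g^2*(P-1-2*r) >= 2*r*(P-1) ->
  Inv (P/(P-1)) s -> Inv (P/(P-1)) (cl_step a b g P wt vt s).
Proof.
  intros Hg HP Hric Hr Hr2 Hur H [Hz [H1 Hm]].
  destruct s as [x x1 xm l1 lm]; simpl in *.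
  unfold cl_step, control, Inv; simpl.
  set (y := x + vt).
  set (c := P/(P-1)) in *.
  destruct Hz as [Z|Z]; subst.
  - assert (p0 : l1 <= 0) by nra.
    destruct (helper a g P r xm y l1 lm Hg HP Hric Hr Hr2 Hur H p0 Hm) as [A [B C]].
    destruct (Rle_dec (lm + lincr g P xm y) (l1 + lincr g P 0 y)) as [D|D].
    + replace (ahat a g P * 0 + 1 * - (ahat a g P * 0 + ghat a g P * y) + ghat a g P * y) with 0 by ring.
      replace (ahat a g P * xm + -1 * - (ahat a g P * 0 + ghat a g P * y) + ghat a g P * y)
        with (ahat a g P * xm + 2*ghat a g P*y) by ring.
      split; [left; reflexivity|]. split; [nra|]. apply C; lra.
    + replace (ahat a g P * xm + -1 * (ahat a g P * xm + ghat a g P * y) + ghat a g P * y) with 0 by ring.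
      replace (ahat a g P * 0 + 1 * (ahat a g P * xm + ghat a g P * y) + ghat a g P * y)
        with (ahat a g P * xm + 2*ghat a g P*y) by ring.
      split; [right; reflexivity|]. split; [apply C; lra|]. nra.
  - assert (p0 : lm <= 0) by nra.
    destruct (helper a g P r x1 y lm l1 Hg HP Hric Hr Hr2 Hur H p0 H1) as [A [B C]].
    destruct (Rle_dec (lm + lincr g P 0 y) (l1 + lincr g P x1 y)) as [D|D].
    + replace (ahat a g P * x1 + 1 * - (ahat a g P * x1 + ghat a g P * y) + ghat a g P * y) with 0 by ring.
      replace (ahat a g P * 0 + -1 * - (ahat a g P * x1 + ghat a g P * y) + ghat a g P * y)
        with (ahat a g P * x1 + 2*ghat a g P*y) by ring.
      split; [left; reflexivity|]. split; [nra|]. apply C; lra.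
    + replace (ahat a g P * 0 + -1 * (ahat a g P * 0 + ghat a g P * y) + ghat a g P * y) with 0 by ring.
      replace (ahat a g P * x1 + 1 * (ahat a g P * 0 + ghat a g P * y) + ghat a g P * y)
        with (ahat a g P * x1 + 2*ghat a g P*y) by ring.
      split; [right; reflexivity|]. split; [apply C; lra|]. nra.
Qed.

Definition Lsel (b : R) s := if Req_EM_T b 1 then cl_l1 s else cl_lm1 s.
Definition Xsel (b : R) s := if Req_EM_T b 1 then cl_xh1 s else cl_xhm1 s.

Lemma sel_step a b g P wt vt s : (b = 1 \/ b = -1) ->
  Lsel b (cl_step a b g P wt vt s) = Lsel b s + lincr g P (Xsel b s) (cl_x s + vt) /\
  Xsel b (cl_step a b g P wt vt s) = ahat a g P * Xsel b s + b * control a g P s (cl_x s + vt)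
     + ghat a g P * (cl_x s + vt) /\
  cl_x (cl_step a b g P wt vt s) = a * cl_x s + b * control a g P s (cl_x s + vt) + wt.
Proof.
  intros [Hb|Hb]; subst; unfold Lsel, Xsel, cl_step; simpl;
  destruct (Req_EM_T _ 1); try lra; simpl; repeat split; ring.
Qed.

Theorem theorem6 (a gamma : R) :
  0 < gamma ->
  Pval a gamma > 1 ->
  Pval a gamma > 2 * gamma - 1 ->
  (Pval a gamma + 2 * gamma^2 - 1)
    * (Pval a gamma - 1 - 2 * sqrt (gamma^2 - Pval a gamma))^2
  >= (Pval a gamma - 1) * ((Pval a gamma + 1)^2 - 4 * gamma^2) ->
  forall (b : R), (b = 1 \/ b = -1) ->
  forall (T : nat) (w v : nat -> R) (x0 : R),
    sum_f_R0 (fun k => (cl_x_traj a b gamma w v x0 k)^2) (S T)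
    - gamma^2 * sum_f_R0 (fun k => (w k)^2) T
    - gamma^2 * sum_f_R0 (fun k => (v k)^2) (S T)
    - Pval a gamma * (cl_x_traj a b gamma w v x0 0)^2 <= 0.
Proof.
  intros Hg HP1 HP2 Hhyp b Hb T w v x0.
  pose proof (riccati a gamma HP1) as Hric.
  unfold cl_x_traj.
  set (P := Pval a gamma) in *.
  set (g := gamma) in *.
  assert (HGP : g^2 - P >= 0).
  { assert ((P - g^2)*(P + g^2 - 1) = - (g^2*a^2*P)) by nra.
    assert (0 <= g^2*a^2*P) by (apply Rmult_le_pos; [nra|lra]).
    destruct (Rle_lt_dec P (g^2)); [lra|]. exfalso.
    assert ((P - g^2)*(P + g^2 - 1) > 0) by (apply Rmult_lt_0_compat; nra). lra. }
  set (r := sqrt (g^2 - P)) in *.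
  assert (Hr2 : r^2 = g^2 - P) by (unfold r; rewrite <- Rsqr_pow2; apply Rsqr_sqrt; lra).
  assert (Hr : r >= 0) by (apply Rle_ge, sqrt_pos).
  assert (Hur : P - 1 > 2*r).
  { assert ((P+1)^2 > 4*g^2) by nra.
    assert ((P-1)^2 > (2*r)^2) by nra. nra. }
  assert (H : g^2*(P-1-2*r) >= 2*r*(P-1)).
  { assert (E : (P - 1) * ((P + 1)^2 - 4 * g^2) = (P-1)*(P-1-2*r)*(P-1+2*r)) by nra.
    rewrite E in Hhyp.
    set (d := P-1-2*r) in *.
    assert (Hd : d > 0) by (unfold d; lra).
    assert ((P + 2*g^2 - 1)*d >= (P-1)*(P-1+2*r)).
    { apply Rle_ge. apply (Rmult_le_reg_r d); [lra|]. nra. }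
    unfold d in *. nra. }
  set (c := P/(P-1)).
  assert (Hc : c*(P-1) = P) by (unfold c; field; lra).
  set (tr := cl_traj a b g P w v x0).
  assert (Hinv : forall n, Inv c (tr n)).
  { induction n as [|n IH].
    - unfold tr, Inv; simpl. split; [left; reflexivity|]. split; nra.
    - unfold tr in *. simpl. unfold c in *. apply inv_step with (r := r); auto. }
  assert (Hf : forall n,
    sum_f_R0 (fun k => (cl_x (tr k))^2) n - g^2 * sum_f_R0 (fun k => (w k)^2) n
    - g^2 * sum_f_R0 (fun k => (v k)^2) n - P * (cl_x (tr O))^2
    <= Lsel b (tr (S n)) - P*(cl_x (tr (S n)) - Xsel b (tr (S n)))^2).
  { induction n as [|n IH].
    - simpl sum_f_R0.
      change (tr 1%nat) with (cl_step a b g P (w 0%nat) (v 0%nat) (tr 0%nat)).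
      destruct (sel_step a b g P (w 0%nat) (v 0%nat) (tr 0%nat) Hb) as [E1 [E2 E3]].
      rewrite E1, E2, E3.
      assert (L0 : Lsel b (tr 0%nat) = 0) by (unfold Lsel, tr; simpl; destruct (Req_EM_T b 1); reflexivity).
      assert (X0 : Xsel b (tr 0%nat) = 0) by (unfold Xsel, tr; simpl; destruct (Req_EM_T b 1); reflexivity).
      pose proof (filt a g P b (Lsel b (tr 0%nat)) (cl_x (tr 0%nat)) (Xsel b (tr 0%nat))
        (control a g P (tr 0%nat) (cl_x (tr 0%nat) + v 0%nat)) (w 0%nat) (v 0%nat) Hg HP1 Hric HGP).
      rewrite L0, X0 in *. replace (cl_x (tr 0%nat)) with x0 in * by reflexivity. lra.
    - rewrite !tech5.
      change (tr (S (S n))) with (cl_step a b g P (w (S n)) (v (S n)) (tr (S n))).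
      destruct (sel_step a b g P (w (S n)) (v (S n)) (tr (S n)) Hb) as [E1 [E2 E3]].
      rewrite E1, E2, E3.
      pose proof (filt a g P b (Lsel b (tr (S n))) (cl_x (tr (S n))) (Xsel b (tr (S n)))
        (control a g P (tr (S n)) (cl_x (tr (S n)) + v (S n))) (w (S n)) (v (S n)) Hg HP1 Hric HGP).
      lra. }
  rewrite !tech5. fold tr.
  specialize (Hf T).
  destruct (Hinv (S T)) as [_ [I1 I2]].
  assert (Isel : Lsel b (tr (S T)) + c * (Xsel b (tr (S T)))^2 <= 0)
    by (unfold Lsel, Xsel; destruct (Req_EM_T b 1); lra).
  set (X := cl_x (tr (S T))) in *. set (Z := Xsel b (tr (S T))) in *.
  assert (Q : X^2 - P*(X - Z)^2 <= c*Z^2).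
  { assert ((P-1)*(c*Z^2 - X^2 + P*(X-Z)^2) = ((P-1)*X - P*Z)^2).
    { replace ((P-1)*(c*Z^2 - X^2 + P*(X-Z)^2)) with (c*(P-1)*Z^2 - (P-1)*X^2 + (P-1)*P*(X-Z)^2) by ring.
      rewrite Hc. ring. }
    assert (0 <= (P-1)*(c*Z^2 - X^2 + P*(X-Z)^2)) by (rewrite H0; apply pow2_ge_0).
    destruct (Rle_lt_dec 0 (c*Z^2 - X^2 + P*(X-Z)^2)); [lra|]. exfalso. nra. }
  assert (0 <= g^2 * (v (S T))^2) by (apply Rmult_le_pos; [nra|apply pow2_ge_0]).
  clearbody X Z c tr r P g. lra.
Qed.
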